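(* Let $r\in(0,1)$ and let $p=T^3+rT^2+T+r$ over $\mathbb T$. Then a polynomial $q$ over $\mathbb T$ satisfies $p\in(T+r)\boxdot q$ if and only if $q=T^2+sT+1$ for some $s\in[0,r]$. In particular $r^{-2}T^2+r^{-1}T+1$ is not such a quotient.
   Context: The tropical hyperfield $\mathbb T$ is $\mathbb R_{\ge0}$ with usual multiplication and hyperaddition $a\boxplus b=\{\max\{a,b\}\}$ if $a\ne b$, $a\boxplus a=[0,a]$ (so $c\in a\boxplus b$ iff the maximum of $a,b,c$ is attained at least twice). Polynomials over $\mathbb T$ are finitely supported sequences $\sum c_iT^i$; the hyperproduct is $p\boxdot q=\{\sum e_iT^i : e_i\in \boxplus_{k+l=i} c_kd_l\}$, with iterated sums $\boxplus_{i=1}^n a_i=\bigcup_{b\in\boxplus_{i=1}^{n-1}a_i} b\boxplus a_n$. *)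

(* Defs.v *)
(* the tropical hyperfield T = R_{>=0} inside Stdlib's R. *)
From Stdlib Require Import Reals List.
Open Scope R_scope.

Definition hadd (a b c : R) : Prop :=
  if Req_EM_T a b then 0 <= c <= a else c = Rmax a b.

Fixpoint hsum_from (acc : R -> Prop) (l : list R) : R -> Prop :=
  match l with
  | nil => acc
  | a :: l' => hsum_from (fun c => exists b, acc b /\ hadd b a c) l'
  end.

Definition hsum (a1 : R) (l : list R) (c : R) : Prop :=
  hsum_from (fun x => x = a1) l c.

Definition tpoly := nat -> R.

Definition is_tpoly (p : tpoly) : Prop :=
  (forall i, 0 <= p i) /\ exists N, forall i, (N <= i)%nat -> p i = 0.

(* e_i \in [+]_{k+l=i} c_k d_l, with the terms ordered k = 0, 1, ..., i *)
Definition in_hcoef (c d : tpoly) (i : nat) (x : R) : Prop :=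
  hsum (c 0%nat * d i) (map (fun k => c k * d (i - k)%nat) (seq 1 i)) x.

Definition in_hprod (c d e : tpoly) : Prop :=
  is_tpoly e /\ forall i, in_hcoef c d i (e i).

Definition tpoly4 (a0 a1 a2 a3 : R) : tpoly :=
  fun i => match i with
           | 0%nat => a0 | 1%nat => a1 | 2%nat => a2 | 3%nat => a3 | _ => 0
           end.

(* Main.v *)
Require Import Defs.
From Stdlib Require Import Reals Lra Lia List FunctionalExtensionality.
Open Scope R_scope.

Lemma hadd_nonneg a b c : 0 <= a -> 0 <= b -> hadd a b c -> 0 <= c.
Proof.
  unfold hadd; destruct (Req_EM_T a b); intros.
  - lra.
  - subst c. unfold Rmax; destruct (Rle_dec a b); lra.
Qed.

Lemma hsum_zeros : forall l, (forall a, In a l -> a = 0) ->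
  forall acc : R -> Prop, (forall x, acc x -> 0 <= x) ->
  forall x, hsum_from acc l x <-> acc x.
Proof.
  induction l as [|a l IH]; intros Hl acc Hacc x; simpl; [tauto|].
  assert (Ha : a = 0) by (apply Hl; simpl; auto). subst a.
  rewrite IH.
  - split.
    + intros [b [Hb Hh]]. unfold hadd in Hh.
      destruct (Req_EM_T b 0).
      * subst b. replace x with 0 by lra. auto.
      * subst x. specialize (Hacc b Hb). unfold Rmax; destruct (Rle_dec b 0); [lra|auto].
    + intros Hx. exists x; split; auto. unfold hadd.
      specialize (Hacc x Hx). destruct (Req_EM_T x 0); [lra|].
      unfold Rmax; destruct (Rle_dec x 0); lra.
  - intros a Ha; apply Hl; simpl; auto.
  - intros y [b [Hb Hh]]. apply (hadd_nonneg b 0 y); auto; lra.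
Qed.

Lemma hcoef_S r d j x : 0 <= r -> (forall i, 0 <= d i) ->
  in_hcoef (tpoly4 r 1 0 0) d (S j) x <-> hadd (r * d (S j)) (d j) x.
Proof.
  intros Hr Hd. unfold in_hcoef, hsum.
  change (seq 1 (S j)) with (1%nat :: seq 2 j).
  cbn [map hsum_from].
  rewrite hsum_zeros.
  - replace (tpoly4 r 1 0 0 1%nat * d (S j - 1)%nat) with (d j).
    2:{ cbv beta iota delta [tpoly4]. rewrite Nat.sub_succ, Nat.sub_0_r, Rmult_1_l. reflexivity. }
    simpl. split; [intros [b [-> H]]; auto | intros H; eauto].
  - intros a Ha. apply in_map_iff in Ha. destruct Ha as [k [<- Hk]].
    apply in_seq in Hk. destruct k as [|[|k]]; try lia. cbv beta iota delta [tpoly4]. destruct k as [|[|k]]; apply Rmult_0_l.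
  - intros y [b [Hb Hh]]. subst b. eapply hadd_nonneg; [| |exact Hh].
    + apply Rmult_le_pos; auto.
    + cbv beta iota delta [tpoly4]. apply Rmult_le_pos; [lra|auto].
Qed.

Lemma hcoef_0 r d x : in_hcoef (tpoly4 r 1 0 0) d 0 x <-> x = r * d 0%nat.
Proof. unfold in_hcoef, hsum. simpl. tauto. Qed.

Lemma part1 (r : R) (hr : 0 < r < 1) :
  forall q : tpoly, is_tpoly q ->
     (in_hprod (tpoly4 r 1 0 0) q (tpoly4 r 1 r 1) <->
      exists s, 0 <= s <= r /\ q = tpoly4 1 s 1 0).
Proof.
  intros q [Hq [N HN]]. split.
  - intros [_ H].
    assert (HS : forall j, hadd (r * q (S j)) (q j) (tpoly4 r 1 r 1 (S j))).
    { intro j. apply hcoef_S; auto; lra. }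
    assert (Hz : forall k i, (3 <= i)%nat -> (N <= i + k)%nat -> q i = 0).
    { induction k as [|k IH]; intros i Hi Hk.
      - apply HN; lia.
      - assert (Hi1 : q (S i) = 0) by (apply IH; lia).
        specialize (HS i). rewrite Hi1 in HS.
        destruct i as [|[|[|i]]]; try lia. cbv beta iota delta [tpoly4] in HS.
        unfold hadd in HS. specialize (Hq (S (S (S i)))).
        destruct (Req_EM_T _ _); [lra|].
        revert HS; unfold Rmax; destruct (Rle_dec _ _); lra. }
    assert (H3 : q 3%nat = 0) by (apply (Hz N); lia).
    assert (H0 : q 0%nat = 1).
    { specialize (H 0%nat). apply (proj1 (hcoef_0 r q _)) in H. cbv beta iota delta [tpoly4] in H.
      apply Rmult_eq_reg_l with r; [rewrite Rmult_1_r; lra|lra]. }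
    assert (H2 : q 2%nat = 1).
    { pose proof (HS 2%nat) as h. rewrite H3 in h. cbv beta iota delta [tpoly4] in h. unfold hadd in h.
      pose proof (Hq 2%nat). destruct (Req_EM_T _ _); [lra|].
      revert h; unfold Rmax; destruct (Rle_dec _ _); lra. }
    assert (H1 : q 1%nat <= r).
    { pose proof (HS 1%nat) as h. rewrite H2 in h. cbv beta iota delta [tpoly4] in h. unfold hadd in h.
      destruct (Req_EM_T _ _); [lra|].
      revert h; unfold Rmax; destruct (Rle_dec _ _); lra. }
    exists (q 1%nat). split; [split; auto|].
    apply functional_extensionality. intro i.
    destruct i as [|[|[|[|i]]]]; simpl; auto.
    apply (Hz N); lia.
  - intros [s [Hs ->]]. split.
    + split.
      * intro i; destruct i as [|[|[|[|i]]]]; simpl; lra.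
      * exists 4%nat. intros i Hi. destruct i as [|[|[|[|i]]]]; try lia; reflexivity.
    + intro i. destruct i as [|i].
      * apply (proj2 (hcoef_0 _ _ _)). cbv beta iota delta [tpoly4]. rewrite Rmult_1_r. reflexivity.
      * apply (proj2 (hcoef_S r _ _ _ ltac:(lra) Hq)).
        destruct i as [|[|[|i]]]; cbv beta iota delta [tpoly4]; unfold hadd;
          destruct (Req_EM_T _ _); try lra; unfold Rmax; destruct (Rle_dec _ _);
          try lra; first [nra | destruct i; reflexivity].
Qed.

Theorem mainTheorem8 (r : R) (hr : 0 < r < 1) :
  (forall q : tpoly, is_tpoly q ->
     (in_hprod (tpoly4 r 1 0 0) q (tpoly4 r 1 r 1) <->
      exists s, 0 <= s <= r /\ q = tpoly4 1 s 1 0))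
  /\ ~ in_hprod (tpoly4 r 1 0 0) (tpoly4 1 (/ r) (/ (r * r)) 0) (tpoly4 r 1 r 1).
Proof.
  split; [apply part1; auto|].
  intro H. apply part1 in H; auto.
  - destruct H as [s [_ Hs]].
    assert (E : / (r * r) = 1) by exact (f_equal (fun f => f 2%nat) Hs).
    assert (rr : r * r <> 0) by nra.
    pose proof (Rinv_r (r * r) rr). rewrite E in H. nra.
  - split.
    + intro i; destruct i as [|[|[|[|i]]]]; simpl; try lra.
      * left; apply Rinv_0_lt_compat; lra.
      * left; apply Rinv_0_lt_compat; nra.
    + exists 4%nat. intros i Hi. destruct i as [|[|[|[|i]]]]; try lia; reflexivity.
Qed.
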